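(* The Perfect Split Heuristic $h$ is admissible on $\mathcal G_{\mathcal X,\mathcal Y}$: for every OR node $o$, $h(o)\le f(o)$, and for every AND node $a$, $h(a)\le f(a)$, where $f$ denotes the true value.
   Context: Let $x_1,\dots,x_N\in\{0,1\}^F$ be a binary dataset $\mathcal X$ with labels $\mathcal Y\in\{0,1\}^N$, $[N]=\{1,\dots,N\}$. For $\mathcal I\subseteq[N]$, $f\in[F]$, $k\in\{0,1\}$ let $\mathcal I|_{f=k}=\{i\in\mathcal I:(x_i)_f=k\}$, $c^k(\mathcal I)=|\{i\in\mathcal I:y_i=k\}|$, $\mathcal V(\mathcal I)=\{f:\mathcal I|_{f=0}\neq\emptyset\text{ and }\mathcal I|_{f=1}\neq\emptyset\}$. Fix $\rho^1,\rho^0>0$, $\alpha\in(0,1)$, $\beta\ge0$. Let $\ell_{\rm leaf}(c^1,c^0)=B(c^1+\rho^1,c^0+\rho^0)/B(\rho^1,\rho^0)$ ($B$ the Beta function), $p_{\rm split}(d)=\alpha(1+d)^{-\beta}$, $p_{\rm leaf}(d,\mathcal I)=1$ if $\mathcal V(\mathcal I)=\emptyset$ and $1-p_{\rm split}(d)$ otherwise, $p_{\rm inner}(d,\mathcal I)=0$ if $\mathcal V(\mathcal I)=\emptyset$ and $p_{\rm split}(d)/|\mathcal V(\mathcal I)|$ otherwise; $-\log0=+\infty$. $\mathcal G_{\mathcal X,\mathcal Y}$: for nonempty $\mathcal I\subseteq[N]$ and $d\in\{0,\dots,F\}$, an OR node $o_{\mathcal I,d}$ with a terminal child $t_{\mathcal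 I,d}$ via an edge of cost $-\log p_{\rm leaf}(d,\mathcal I)-\log\ell_{\rm leaf}(c^1(\mathcal I),c^0(\mathcal I))$; for $d<F$ and each $f\in\mathcal V(\mathcal I)$ an AND child $a_{\mathcal I,d,f}$ via an edge of cost $-\log p_{\rm inner}(d,\mathcal I)$, and $a_{\mathcal I,d,f}$ has cost-$0$ edges to $o_{\mathcal I|_{f=0},d+1}$ and $o_{\mathcal I|_{f=1},d+1}$; the root is $r=o_{[N],0}$ and only nodes reachable from $r$ are kept. A partial solution rooted at an OR node $u$ is a set $\mathcal S$ of nodes containing $u$, all reachable from $u$ inside $\mathcal S$, such that every AND node of $\mathcal S$ has both children in $\mathcal S$ and every OR node of $\mathcal S$ has exactly one child in $\mathcal S$; its cost is the sum of the costs of edges $v\to w$ with $v,w\in\mathcal S$. The true value $f(u)$ of an OR node $u$ is the minimum cost of a partial solution rooted at $u$; for an AND node $a$ with children $o_0,o_1$, $f(a)=f(o_0)+f(o_1)$. Perfect Split Heuristic: $h(t)=0$ for terminal nodes; $h(o_{\mathcal I,d})=-\max\{\log\ell_{\rm leaf}(c^1(\mathcal I),c^0(\mathcal I)),\ \log p_{\rm split}(d)+\log\ell_{\rm leaf}(c^1(\mathcal I),0)+\log\ell_{\rm leaf}(0,c^0(\mathcal I))\}$; $h(a_{\mathcal I,d,f})=h(o_{\mathcal I|_{f=0},d+1})+h(o_{\mathcal I|_{f=1},d+1})$. *)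

(* Defs.v *)
From HB Require Import structures.
From mathcomp Require Import all_boot all_order all_algebra.
From mathcomp Require Import all_classical all_reals all_analysis.

Set Implicit Arguments.
Unset Strict Implicit.
Unset Printing Implicit Defensive.

Import Order.TTheory GRing.Theory Num.Theory.

Local Open Scope classical_set_scope.
Local Open Scope ring_scope.

Definition Beta {R : realType} (a b : R) : R :=
  Rintegral (@lebesgue_measure R) `[0%R, 1%R]
            (fun t => t `^ (a - 1) * (1 - t) `^ (b - 1)).

Definition neglog {R : realType} (p : R) : \bar R :=
  if p == 0 then +oo%E else (- ln p)%:E.

(* Dataset: N points, F binary features; X i f = (x_i)_f, Y i = y_i. *)

Definition restr {N F : nat} (X : 'I_N -> 'I_F -> bool)
  (I : {set 'I_N}) (f : 'I_F) (k : bool) : {set 'I_N} :=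
  [set i in I | X i f == k].

Definition cnt {N : nat} (Y : 'I_N -> bool) (I : {set 'I_N}) (k : bool) : nat :=
  #|[set i in I | Y i == k]|.

Definition Vset {N F : nat} (X : 'I_N -> 'I_F -> bool) (I : {set 'I_N})
  : {set 'I_F} :=
  [set f : 'I_F | (restr X I f false != finset.set0) && (restr X I f true != finset.set0)].

Definition lleaf {R : realType} (rho1 rho0 : R) (c1 c0 : nat) : R :=
  Beta (c1%:R + rho1) (c0%:R + rho0) / Beta rho1 rho0.

Definition psplit {R : realType} (alpha beta : R) (d : nat) : R :=
  alpha * ((1 + d%:R) `^ (- beta)).

Definition pleaf {R : realType} {N F : nat} (alpha beta : R)
  (X : 'I_N -> 'I_F -> bool) (d : nat) (I : {set 'I_N}) : R :=
  if Vset X I == finset.set0 then 1 else 1 - psplit alpha beta d.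

Definition pinner {R : realType} {N F : nat} (alpha beta : R)
  (X : 'I_N -> 'I_F -> bool) (d : nat) (I : {set 'I_N}) : R :=
  if Vset X I == finset.set0 then 0 else psplit alpha beta d / #|Vset X I|%:R.

(* cost of the edge o_{I,d} -> t_{I,d} *)
Definition leaf_cost {R : realType} {N F : nat} (rho1 rho0 alpha beta : R)
  (X : 'I_N -> 'I_F -> bool) (Y : 'I_N -> bool) (I : {set 'I_N}) (d : nat)
  : \bar R :=
  (neglog (pleaf alpha beta X d I)
   + neglog (lleaf rho1 rho0 (cnt Y I true) (cnt Y I false)))%E.

(* cost of the edge o_{I,d} -> a_{I,d,f} *)
Definition inner_cost {R : realType} {N F : nat} (alpha beta : R)
  (X : 'I_N -> 'I_F -> bool) (I : {set 'I_N}) (d : nat) : \bar R :=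
  neglog (pinner alpha beta X d I).

(* Since the two children of
   an AND node a_{I,d,f} have disjoint (nonempty) index sets, a partial
   solution is a finite binary tree: at each OR node either the terminal
   child is chosen (PLeaf) or an AND child a_{I,d,f} (PSplit f t0 t1) together
   with partial solutions t0, t1 rooted at o_{I|f=0,d+1}, o_{I|f=1,d+1}. *)
Inductive ptree (F : nat) : Type :=
| PLeaf : ptree F
| PSplit : 'I_F -> ptree F -> ptree F -> ptree F.
Arguments PLeaf {F}.

Fixpoint valid {N F : nat} (X : 'I_N -> 'I_F -> bool) (I : {set 'I_N})
  (d : nat) (t : ptree F) : bool :=
  match t with
  | PLeaf => true
  | PSplit f t0 t1 =>
      [&& d < F, f \in Vset X I,
          valid X (restr X I f false) d.+1 t0
        & valid X (restr X I f true) d.+1 t1]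
  end%N.

Fixpoint cost {R : realType} {N F : nat} (rho1 rho0 alpha beta : R)
  (X : 'I_N -> 'I_F -> bool) (Y : 'I_N -> bool) (I : {set 'I_N}) (d : nat)
  (t : ptree F) : \bar R :=
  match t with
  | PLeaf => leaf_cost rho1 rho0 alpha beta X Y I d
  | PSplit f t0 t1 =>
      (inner_cost alpha beta X I d
       + cost rho1 rho0 alpha beta X Y (restr X I f false) d.+1 t0
       + cost rho1 rho0 alpha beta X Y (restr X I f true) d.+1 t1)%E
  end.

Definition fOR {R : realType} {N F : nat} (rho1 rho0 alpha beta : R)
  (X : 'I_N -> 'I_F -> bool) (Y : 'I_N -> bool) (I : {set 'I_N}) (d : nat)
  : \bar R :=
  ereal_inf [set cost rho1 rho0 alpha beta X Y I d t
            | t in [set t : ptree F | valid X I d t]].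

Definition fAND {R : realType} {N F : nat} (rho1 rho0 alpha beta : R)
  (X : 'I_N -> 'I_F -> bool) (Y : 'I_N -> bool) (I : {set 'I_N}) (d : nat)
  (f : 'I_F) : \bar R :=
  (fOR rho1 rho0 alpha beta X Y (restr X I f false) d.+1
   + fOR rho1 rho0 alpha beta X Y (restr X I f true) d.+1)%E.

Definition hOR {R : realType} {N : nat} (rho1 rho0 alpha beta : R)
  (Y : 'I_N -> bool) (I : {set 'I_N}) (d : nat) : R :=
  - Num.max (ln (lleaf rho1 rho0 (cnt Y I true) (cnt Y I false)))
            (ln (psplit alpha beta d)
             + ln (lleaf rho1 rho0 (cnt Y I true) 0)
             + ln (lleaf rho1 rho0 0 (cnt Y I false))).

Definition hAND {R : realType} {N F : nat} (rho1 rho0 alpha beta : R)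
  (X : 'I_N -> 'I_F -> bool) (Y : 'I_N -> bool) (I : {set 'I_N}) (d : nat)
  (f : 'I_F) : R :=
  hOR rho1 rho0 alpha beta Y (restr X I f false) d.+1
  + hOR rho1 rho0 alpha beta Y (restr X I f true) d.+1.

(* (I,d) such that o_{I,d} is reachable from the root o_{[N],0}
   (together with nonemptiness of I). *)
Inductive reach {N F : nat} (X : 'I_N -> 'I_F -> bool)
  : {set 'I_N} -> nat -> Prop :=
| reach_root : reach X [set: 'I_N] 0
| reach_step (I : {set 'I_N}) (d : nat) (f : 'I_F) (k : bool) :
    reach X I d -> (d < F)%N -> f \in Vset X I ->
    reach X (restr X I f k) d.+1.

(* Main.v *)
Require Import Defs.
From HB Require Import structures.
From mathcomp Require Import all_boot all_order all_algebra.
From mathcomp Require Import all_classical all_reals all_analysis.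
From mathcomp Require Import ring lra.

Import Order.TTheory GRing.Theory Num.Theory.
Local Open Scope ring_scope.

Section Anal.
Local Open Scope classical_set_scope.
Local Open Scope ring_scope.
Variables (R : realType) (r1 r0 : R).
Hypotheses (hr1 : 0 < r1) (hr0 : 0 < r0).

Local Notation mu := (@lebesgue_measure R).
Local Notation D := (`[0%R, 1%R]%classic : set R).

Definition W (t : R) : R := t `^ (r1 - 1) * (1 - t) `^ (r0 - 1).
Definition Ew (q : R -> R) : R := \int[mu]_(t in D) (W t * q t).
Definition Q (n m : nat) (t : R) : R := t ^+ n * (1 - t) ^+ m.

Lemma mD : measurable D. Proof. exact: measurable_itv. Qed.

Lemma inD t : D t -> 0 <= t /\ t <= 1.
Proof. by rewrite /= in_itv /= => /andP[]. Qed.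

Lemma powRnat (x e : R) (n : nat) : 0 <= x -> 0 < e + 1 ->
  x `^ (n%:R + e) = x ^+ n * x `^ e.
Proof.
move=> x0 e1; case: n => [|n]; first by rewrite add0r expr0 mul1r.
rewrite powRD; first by rewrite powR_mulrn.
apply/implyP => /eqP h; exfalso.
have : 1 <= n.+1%:R :> R by rewrite ler1n.
lra.
Qed.

Lemma BetaE n m : Beta (n%:R + r1) (m%:R + r0) = Ew (Q n m).
Proof.
apply: eq_Rintegral => t; rewrite inE => /inD [t0 t1].
have e1 : 0 < r1 - 1 + 1 by rewrite subrK.
have e0 : 0 < r0 - 1 + 1 by rewrite subrK.
have t1' : 0 <= 1 - t by lra.
rewrite /W /Q -!addrA (powRnat _ _ _ t0 e1) (powRnat _ _ _ t1' e0); ring.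
Qed.

Lemma Beta0 : Beta r1 r0 = Ew (Q 0 0).
Proof.
by apply: eq_Rintegral => t _; rewrite /W /Q !expr0 !mulr1.
Qed.

Lemma W_ge0 t : 0 <= W t.
Proof. by rewrite /W mulr_ge0 // powR_ge0. Qed.

Lemma mW : measurable_fun D W.
Proof.
apply: measurable_funTS; rewrite /W.
apply: measurable_realfun.measurable_funM; first exact: measurable_realfun.measurable_powR.
apply: (measurableT_comp (f := fun x : R => x `^ (r0 - 1)) (g := fun x : R => 1 - x)).
  exact: measurable_realfun.measurable_powR.
apply: measurable_realfun.measurable_funB; first exact: measurable_cst.
exact: measurable_id.
Qed.

Definition goodK (f : R -> R) :=
  measurable_fun D f /\ exists K : R, forall t, D t -> `|f t| <= K.

Lemma goodK_bounded f : goodK f -> [bounded f x | x in D].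
Proof.
move=> [_ [K hK]]; rewrite /bounded_near.
near=> M => x Dx /=; apply: le_trans (hK x Dx) _.
near: M; apply: nbhs_pinfty_ge; exact: num_real.
Unshelve. all: by end_near.
Qed.

Lemma goodM f g : goodK f -> goodK g -> goodK (fun t => f t * g t).
Proof.
move=> [mf [K1 h1]] [mg [K2 h2]]; split.
  exact: measurable_realfun.measurable_funM.
exists (K1 * K2) => t Dt; rewrite normrM; apply: ler_pM => //; [exact: h1 | exact: h2].
Qed.

Lemma goodD f g : goodK f -> goodK g -> goodK (fun t => f t + g t).
Proof.
move=> [mf [K1 h1]] [mg [K2 h2]]; split.
  exact: measurable_realfun.measurable_funD.
exists (K1 + K2) => t Dt; apply: le_trans (ler_normD _ _) _; apply: lerD; [exact: h1 | exact: h2].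
Qed.

Arguments goodM {f g}.
Arguments goodD {f g}.

Lemma goodC c : goodK (fun _ => c).
Proof. by split; [exact: measurable_cst | exists `|c|]. Qed.

Lemma goodQ n m : goodK (Q n m).
Proof.
split.
  apply: measurable_realfun.measurable_funM;
    apply: measurable_realfun.measurable_funX => //.
  apply: measurable_realfun.measurable_funB => //; exact: measurable_cst.
exists 1 => t /inD [t0 t1]; rewrite /Q ger0_norm.
  by rewrite mulr_ile1 // ?exprn_ge0 ?exprn_ile1 // ?subr_ge0 //; lra.
by rewrite mulr_ge0 // exprn_ge0 // subr_ge0.
Qed.


Lemma Q_ge0 n m t : D t -> 0 <= Q n m t.
Proof. by move=> /inD [t0 t1]; rewrite /Q mulr_ge0 // exprn_ge0 // subr_ge0. Qed.

Definition Kp (e : R) : R := Num.min 1 ((4^-1 : R) `^ e).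

Lemma Kp_gt0 e : 0 < Kp e.
Proof. by rewrite /Kp lt_min ltr01 powR_gt0 // invr_gt0 ltr0n. Qed.

Lemma Kp_le e t : 4^-1 <= t -> t <= 1 -> Kp e <= t `^ e.
Proof.
move=> t4 t1; have t0 : 0 < t by apply: lt_le_trans t4; rewrite invr_gt0 ltr0n.
have [e0|e0] := leP 0 e.
  rewrite /Kp ge_min; apply/orP; right.
  apply: ge0_ler_powR => //; rewrite nnegrE ?ltW // invr_ge0 ler0n.
rewrite /Kp ge_min; apply/orP; left.
rewrite -[e]opprK powRN invf_ge1; last by apply: powR_gt0.
have -> : 1 = 1 `^ (- e) :> R by rewrite powR1.
apply: ge0_ler_powR => //; rewrite ?nnegrE; lra.
Qed.

Definition Klow (n m : nat) : R := Kp (r1 - 1) * Kp (r0 - 1) * ((4^-1) ^+ n * (4^-1) ^+ m).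

Lemma Klow_gt0 n m : 0 < Klow n m.
Proof.
by rewrite /Klow !mulr_gt0 ?Kp_gt0 // exprn_gt0 // invr_gt0 ltr0n.
Qed.

Lemma Klow_le n m t : 4^-1 <= t -> t <= 3/4 -> Klow n m <= W t * Q n m t.
Proof.
move=> ta tb.
have i0 : 0 <= (4^-1 : R) by rewrite invr_ge0 ler0n.
have i4 : (4^-1 : R) <= 1 - t by lra.
have t0 : 0 <= t by lra.
apply: ler_pM.
- by rewrite mulr_ge0 // ltW // Kp_gt0.
- by rewrite mulr_ge0 // exprn_ge0.
- rewrite /W; apply: ler_pM; [exact: ltW (Kp_gt0 _) | exact: ltW (Kp_gt0 _) | |].
    by apply: Kp_le => //; lra.
  by apply: Kp_le => //; lra.
- apply: ler_pM; rewrite ?exprn_ge0 //; apply: lerXn2r; rewrite ?nnegrE //; lra.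
Qed.

Lemma sgn_same (u v : R) (n k : nat) : 0 <= u -> 0 <= v ->
  0 <= (u ^+ n - v ^+ n) * (u ^+ k - v ^+ k).
Proof.
move=> u0 v0; have [uv|vu] := leP u v.
  apply: mulr_le0; rewrite subr_le0; apply: lerXn2r; rewrite ?nnegrE //.
apply: mulr_ge0; rewrite subr_ge0; apply: lerXn2r; rewrite ?nnegrE // ltW //.
Qed.

Lemma sgn_opp (u v : R) (n k : nat) : 0 <= u -> u <= 1 -> 0 <= v -> v <= 1 ->
  (u ^+ n - v ^+ n) * ((1 - u) ^+ k - (1 - v) ^+ k) <= 0.
Proof.
move=> u0 u1 v0 v1; have [uv|vu] := leP u v.
  apply: mulr_le0_ge0; rewrite ?subr_le0 ?subr_ge0; apply: lerXn2r;
    rewrite ?nnegrE //; lra.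
apply: mulr_ge0_le0; rewrite ?subr_le0 ?subr_ge0; apply: lerXn2r;
  rewrite ?nnegrE //; lra.
Qed.

Section Integ.
Hypothesis integ : mu.-integrable D (EFin \o W).

Lemma intW f : goodK f -> mu.-integrable D (EFin \o (fun t => W t * f t)).
Proof.
move=> gf; have := @integrableMl _ _ _ mu D mD _ _ integ (proj1 gf) (goodK_bounded _ gf).
apply: eq_integrable => //.
Qed.

Lemma EwD f g : goodK f -> goodK g -> Ew (fun t => f t + g t) = Ew f + Ew g.
Proof.
move=> gf gg; rewrite /Ew.
transitivity (\int[mu]_(t in D) (W t * f t + W t * g t)).
  by apply: eq_Rintegral => t _; rewrite mulrDr.
exact: (@RintegralD _ _ _ mu D _ _ mD (intW _ gf) (intW _ gg)).
Qed.

Lemma EwZ c f : goodK f -> Ew (fun t => c * f t) = c * Ew f.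
Proof.
move=> gf; rewrite /Ew.
transitivity (\int[mu]_(t in D) (c * (W t * f t))).
  by apply: eq_Rintegral => t _; rewrite mulrCA.
exact: (@RintegralZl _ _ _ mu D _ c mD (intW _ gf)).
Qed.

Lemma Ew_pos n m : 0 < Ew (Q n m).
Proof.
have ih := intW _ (goodQ n m).
have /integrableP[mh _] := ih.
pose D' := (`[4^-1, 3/4]%classic : set R).
have mD' : measurable D' by exact: measurable_itv.
have sub : D' `<=` D.
  move=> t; rewrite /D' /= !in_itv /= => /andP[a b]; apply/andP; split; lra.
rewrite /Ew /Rintegral -lte_fin fineK; last exact: integrable_fin_num.
apply: (lt_le_trans _ (@ge0_subset_integral _ _ _ mu D' D mD' mD _ mh _ sub)); last first.
  by move=> t Dt; rewrite lee_fin mulr_ge0 // ?W_ge0 // Q_ge0.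
apply: (lt_le_trans _ (@ge0_le_integral _ _ _ mu D' mD' (fun _ => (Klow n m)%:E) _ _
   (measurable_cst _) (measurable_funS mD sub mh) _)); last first.
- move=> t; rewrite /D' /= in_itv /= => /andP[a b]; rewrite lee_fin.
  exact: Klow_le.
- by move=> t _; rewrite lee_fin ltW // Klow_gt0.
have := integral_cst mu mD' (Klow n m)%:E.
rewrite /cst => ->.
have hm := @lebesgue_measure_itv R `[4^-1, 3/4]%R. rewrite /= in hm.
have h34 : (4^-1 : R) < 3 / 4 by lra.
rewrite lte_fin h34 in hm.
rewrite [X in (_ * X)%E](_ : _ = ((3 / 4)%:E + (- 4^-1)%:E)%E); last exact: hm.
by rewrite -EFinD -EFinM lte_fin mulr_gt0 ?Klow_gt0 //; lra.
Qed.

Lemma cheb_core f g m0 g0 : goodK f -> goodK g ->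
  Ew f = m0 * Ew (fun _ => 1) ->
  Ew (fun t => (f t - m0) * (g t - g0)) * Ew (fun _ => 1) =
  Ew (fun t => f t * g t) * Ew (fun _ => 1) - Ew f * Ew g.
Proof.
move=> gf gg ef.
have gfg := goodM gf gg.
have g1 : goodK (fun t => (- m0) * g t) := goodM (goodC _) gg.
have g2 : goodK (fun t => (- g0) * f t) := goodM (goodC _) gf.
have g3 : goodK (fun t : R => (m0 * g0) * 1) := goodM (goodC _) (goodC _).
have eH : Ew (fun t => (f t - m0) * (g t - g0)) =
  Ew (fun t => f t * g t + ((- m0) * g t + ((- g0) * f t + (m0 * g0) * 1))).
  by rewrite /Ew; apply: eq_Rintegral => t _; ring.
have eA : Ew (fun t => f t * g t + ((- m0) * g t + ((- g0) * f t + (m0 * g0) * 1))) =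
  Ew (fun t => f t * g t) + Ew (fun t => (- m0) * g t + ((- g0) * f t + (m0 * g0) * 1)).
  by apply: EwD => //; apply: goodD => //; apply: goodD.
have eB : Ew (fun t => (- m0) * g t + ((- g0) * f t + (m0 * g0) * 1)) =
  Ew (fun t => (- m0) * g t) + Ew (fun t => (- g0) * f t + (m0 * g0) * 1).
  by apply: EwD => //; apply: goodD.
have eC : Ew (fun t => (- g0) * f t + (m0 * g0) * 1) =
  Ew (fun t => (- g0) * f t) + Ew (fun t : R => (m0 * g0) * 1).
  by apply: EwD.
have z1 : Ew (fun t => (- m0) * g t) = - m0 * Ew g by apply: EwZ.
have z2 : Ew (fun t => (- g0) * f t) = - g0 * Ew f by apply: EwZ.
have z3 : Ew (fun t : R => (m0 * g0) * 1) = (m0 * g0) * Ew (fun _ => 1).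
  by apply: (EwZ _ (fun _ => 1)); exact: goodC.
rewrite eH eA eB eC z1 z2 z3 ef; ring.
Qed.

Lemma E1_eq : Ew (Q 0%N 0%N) = Ew (fun _ => 1).
Proof. rewrite /Ew; apply: eq_Rintegral => t _. by rewrite /Q !expr0 mul1r. Qed.

Lemma E1_pos : 0 < Ew (fun _ => 1).
Proof. by rewrite -E1_eq; exact: Ew_pos. Qed.

Lemma cheb f g m0 g0 : goodK f -> goodK g ->
  Ew f = m0 * Ew (fun _ => 1) ->
  (forall t, D t -> 0 <= (f t - m0) * (g t - g0)) ->
  Ew f * Ew g <= Ew (fun t => f t * g t) * Ew (fun _ => 1).
Proof.
move=> gf gg ef hs.
have := cheb_core f g m0 g0 gf gg ef.
have H0 : 0 <= Ew (fun t => (f t - m0) * (g t - g0)).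
  by apply: Rintegral_ge0 => t Dt; rewrite mulr_ge0 ?W_ge0 ?hs.
have := mulr_ge0 H0 (ltW E1_pos).
lra.
Qed.

Lemma cheb_rev f g m0 g0 : goodK f -> goodK g ->
  Ew f = m0 * Ew (fun _ => 1) ->
  (forall t, D t -> (f t - m0) * (g t - g0) <= 0) ->
  Ew (fun t => f t * g t) * Ew (fun _ => 1) <= Ew f * Ew g.
Proof.
move=> gf gg ef hs.
have := cheb_core f g m0 g0 gf gg ef.
have gH : goodK (fun t => (f t - m0) * (g t - g0)).
  by apply: goodM; apply: goodD => //; apply: goodC.
have H0 : 0 <= Ew (fun t => (-1) * ((f t - m0) * (g t - g0))).
  by apply: Rintegral_ge0 => t Dt; rewrite mulr_ge0 ?W_ge0 // mulN1r oppr_ge0 hs.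
rewrite (EwZ _ _ gH) in H0.
have := mulr_ge0 H0 (ltW E1_pos).
lra.
Qed.

Lemma Q_le1 n m t : D t -> Q n m t <= 1.
Proof.
move=> /inD [t0 t1]; rewrite /Q mulr_ile1 // ?exprn_ge0 ?exprn_ile1 // ?subr_ge0 //; lra.
Qed.

Lemma m0_props n m :
  0 <= Ew (Q n m) / Ew (fun _ => 1) /\ Ew (Q n m) / Ew (fun _ => 1) <= 1 /\
  Ew (Q n m) = Ew (Q n m) / Ew (fun _ => 1) * Ew (fun _ => 1).
Proof.
have E1p := E1_pos.
have e0 : 0 <= Ew (Q n m).
  by apply: Rintegral_ge0 => t Dt; rewrite mulr_ge0 ?W_ge0 ?Q_ge0.
have e1 : Ew (Q n m) <= Ew (fun _ => 1).
  apply: (@le_Rintegral _ _ _ mu D _ _ mD (intW _ (goodQ n m)) (intW _ (goodC 1))).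
  by move=> t Dt; rewrite ler_wpM2l ?W_ge0 ?Q_le1.
split; first by rewrite divr_ge0 // ltW.
split; first by rewrite ler_pdivrMr // mul1r.
by rewrite divfK // gt_eqF.
Qed.

Lemma root_ex (k : nat) (x : R) : (0 < k)%N -> 0 <= x -> x <= 1 ->
  exists c, [/\ 0 <= c, c <= 1 & c ^+ k = x].
Proof.
move=> k0 x0 x1; exists (x `^ (k%:R^-1)); split.
- exact: powR_ge0.
- have h1 : x `^ (k%:R^-1) <= 1 `^ (k%:R^-1).
    by apply: ge0_ler_powR; rewrite ?nnegrE ?invr_ge0 ?ler0n.
  by rewrite powR1 in h1.
- rewrite -powR_mulrn ?powR_ge0 // -powRrM mulVf ?powRr1 //.
  by rewrite pnatr_eq0 -lt0n.
Qed.

Lemma P2r (a b : nat) :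
  Ew (Q a 0%N) * Ew (Q b 0%N) <= Ew (Q (a + b) 0%N) * Ew (fun _ => 1).
Proof.
case: a => [|a].
  by rewrite add0n E1_eq mulrC.
have [p0 [p1 p2]] := m0_props a.+1 0%N.
have [c [c0 c1 cE]] := root_ex _ _ (ltn0Sn a) p0 p1.
have := @cheb (Q a.+1 0%N) (Q b 0%N) _ (c ^+ b) (goodQ _ _) (goodQ _ _) p2.
have -> : Ew (fun t => Q a.+1 0%N t * Q b 0%N t) = Ew (Q (a.+1 + b) 0%N).
  by rewrite /Ew; apply: eq_Rintegral => t _; rewrite /Q !expr0 !mulr1 exprD.
apply => t /inD [t0 t1]; rewrite /Q !expr0 !mulr1 -cE.
exact: sgn_same.
Qed.

Lemma P2r' (a b : nat) :
  Ew (Q 0%N a) * Ew (Q 0%N b) <= Ew (Q 0%N (a + b)) * Ew (fun _ => 1).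
Proof.
case: a => [|a].
  by rewrite add0n E1_eq mulrC.
have [p0 [p1 p2]] := m0_props 0%N a.+1.
have [c [c0 c1 cE]] := root_ex _ _ (ltn0Sn a) p0 p1.
have := @cheb (Q 0%N a.+1) (Q 0%N b) _ (c ^+ b) (goodQ _ _) (goodQ _ _) p2.
have -> : Ew (fun t => Q 0%N a.+1 t * Q 0%N b t) = Ew (Q 0%N (a.+1 + b)).
  by rewrite /Ew; apply: eq_Rintegral => t _; rewrite /Q !expr0 !mul1r exprD.
apply => t /inD [t0 t1]; rewrite /Q !expr0 !mul1r -cE.
apply: sgn_same => //; lra.
Qed.

Lemma P1r (n m : nat) :
  Ew (Q n m) * Ew (fun _ => 1) <= Ew (Q n 0%N) * Ew (Q 0%N m).
Proof.
case: n => [|n].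
  by rewrite E1_eq mulrC.
have [p0 [p1 p2]] := m0_props n.+1 0%N.
have [c [c0 c1 cE]] := root_ex _ _ (ltn0Sn n) p0 p1.
have := @cheb_rev (Q n.+1 0%N) (Q 0%N m) _ ((1 - c) ^+ m) (goodQ _ _) (goodQ _ _) p2.
have -> : Ew (fun t => Q n.+1 0%N t * Q 0%N m t) = Ew (Q n.+1 m).
  by rewrite /Ew; apply: eq_Rintegral => t _; rewrite /Q !expr0 mulr1 mul1r.
apply => t /inD [t0 t1]; rewrite /Q !expr0 mulr1 mul1r -cE.
exact: sgn_opp.
Qed.

End Integ.
Lemma Beta1 : Beta r1 r0 = Ew (fun _ => 1).
Proof. by apply: eq_Rintegral => t _; rewrite mulr1. Qed.

Lemma lleafE n m : lleaf r1 r0 n m = Ew (Q n m) / Ew (fun _ => 1).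
Proof. by rewrite /lleaf BetaE Beta1. Qed.

Lemma degen : ~ mu.-integrable D (EFin \o W) -> Ew (fun _ => 1) = 0.
Proof.
move=> hn.
have hoo : ~ (\int[mu]_(x in D) `|(EFin \o W) x| < +oo)%E.
  move=> h; apply: hn; apply/integrableP; split => //.
  by apply/measurable_realfun.measurable_EFinP; exact: mW.
have hoo' : (\int[mu]_(x in D) `|(EFin \o W) x| = +oo)%E.
  by apply/eqP; rewrite -leye_eq leNgt; apply/negP.
rewrite /Ew /Rintegral.
rewrite [X in fine X](_ : _ = \int[mu]_(x in D) `|(EFin \o W) x|)%E; first by rewrite hoo'.
apply: eq_integral => t _; rewrite mulr1 /= ?ger0_norm ?W_ge0 //.
Qed.

Lemma lnDiv (x y : R) : 0 < x -> 0 < y -> ln (x / y) = ln x - ln y.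
Proof.
move=> x0 y0; rewrite lnM ?posrE ?invr_gt0 // lnV // posrE //.
Qed.

Lemma lnP1_ (n m : nat) :
  ln (lleaf r1 r0 n m) <= ln (lleaf r1 r0 n 0) + ln (lleaf r1 r0 0 m).
Proof.
rewrite !lleafE; case: (pselect (mu.-integrable D (EFin \o W))) => [hi|hn]; last first.
  by rewrite degen // !invr0 !mulr0 ln0 // addr0.
have E1p := E1_pos hi.
have P := P1r hi n m.
have a0 := Ew_pos hi n m; have a1 := Ew_pos hi n 0%N; have a2 := Ew_pos hi 0%N m.
rewrite !lnDiv //.
suff : ln (Ew (Q n m)) + ln (Ew (fun _ => 1)) <= ln (Ew (Q n 0%N)) + ln (Ew (Q 0%N m)) by lra.
rewrite -!lnM ?posrE // ler_ln ?posrE ?mulr_gt0 //.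
Qed.

Lemma lnP2_ (a b : nat) :
  ln (lleaf r1 r0 a 0) + ln (lleaf r1 r0 b 0) <= ln (lleaf r1 r0 (a + b)%N 0).
Proof.
rewrite !lleafE; case: (pselect (mu.-integrable D (EFin \o W))) => [hi|hn]; last first.
  by rewrite degen // !invr0 !mulr0 ln0 // addr0.
have E1p := E1_pos hi.
have P := P2r hi a b.
have a0 := Ew_pos hi a 0%N; have a1 := Ew_pos hi b 0%N; have a2 := Ew_pos hi (a + b)%N 0%N.
rewrite !lnDiv //.
suff : ln (Ew (Q a 0%N)) + ln (Ew (Q b 0%N)) <= ln (Ew (Q (a + b)%N 0%N)) + ln (Ew (fun _ => 1)) by lra.
rewrite -!lnM ?posrE // ler_ln ?posrE ?mulr_gt0 //.
Qed.

Lemma lnP2'_ (a b : nat) :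
  ln (lleaf r1 r0 0 a) + ln (lleaf r1 r0 0 b) <= ln (lleaf r1 r0 0 (a + b)%N).
Proof.
rewrite !lleafE; case: (pselect (mu.-integrable D (EFin \o W))) => [hi|hn]; last first.
  by rewrite degen // !invr0 !mulr0 ln0 // addr0.
have E1p := E1_pos hi.
have P := P2r' hi a b.
have a0 := Ew_pos hi 0%N a; have a1 := Ew_pos hi 0%N b; have a2 := Ew_pos hi 0%N (a + b)%N.
rewrite !lnDiv //.
suff : ln (Ew (Q 0%N a)) + ln (Ew (Q 0%N b)) <= ln (Ew (Q 0%N (a + b)%N)) + ln (Ew (fun _ => 1)) by lra.
rewrite -!lnM ?posrE // ler_ln ?posrE ?mulr_gt0 //.
Qed.

End Anal.

Section Comb.
Variables (R : realType) (rho1 rho0 alpha beta : R).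
Hypotheses (hrho1 : 0 < rho1) (hrho0 : 0 < rho0)
  (halpha0 : 0 < alpha) (halpha1 : alpha < 1) (hbeta : 0 <= beta).

Hypothesis lnP1 : forall n m : nat,
  ln (lleaf rho1 rho0 n m) <= ln (lleaf rho1 rho0 n 0) + ln (lleaf rho1 rho0 0 m).
Hypothesis lnP2 : forall a b : nat,
  ln (lleaf rho1 rho0 a 0) + ln (lleaf rho1 rho0 b 0) <= ln (lleaf rho1 rho0 (a + b)%N 0).
Hypothesis lnP2' : forall a b : nat,
  ln (lleaf rho1 rho0 0 a) + ln (lleaf rho1 rho0 0 b) <= ln (lleaf rho1 rho0 0 (a + b)%N).

Lemma psplit_gt0 d : 0 < psplit alpha beta d.
Proof.
by rewrite /psplit mulr_gt0 // powR_gt0.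
Qed.

Lemma psplit_le1 d : psplit alpha beta d <= alpha.
Proof.
rewrite /psplit.
have h1 : 1 <= 1 + d%:R :> R by rewrite lerDl ler0n.
have h2 : 1 <= (1 + d%:R) `^ beta :> R.
  by rewrite -[leLHS](powRr0 (1 + d%:R)); apply: (ler_powR h1).
have h3 : (1 + d%:R) `^ (- beta) <= 1 :> R.
  by rewrite powRN invf_le1 // (lt_le_trans ltr01 h2).
by have := ler_wpM2l (ltW halpha0) h3; rewrite mulr1.
Qed.

Lemma neglog_ge (p : R) : ((- ln p)%:E <= neglog p)%E.
Proof. by rewrite /neglog; case: eqP => _; [exact: leey | exact: lexx]. Qed.

Lemma neglog_ge0 (p : R) : p <= 1 -> (0 <= neglog p)%E.
Proof.
move=> p1; rewrite /neglog; case: eqP => _; first exact: le0y.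
by rewrite lee_fin oppr_ge0 ln_le0.
Qed.

Lemma neglog_pos (p : R) : 0 < p -> neglog p = (- ln p)%:E.
Proof. by move=> p0; rewrite /neglog gt_eqF. Qed.

Variables (N F : nat) (X : 'I_N -> 'I_F -> bool) (Y : 'I_N -> bool).

Lemma cnt_split (I : {set 'I_N}) f k :
  cnt Y I k = (cnt Y (restr X I f false) k + cnt Y (restr X I f true) k)%N.
Proof.
rewrite /cnt -(cardsID [set i | X i f] [set i in I | Y i == k]) addnC.
congr (_ + _)%N; apply: eq_card => i; rewrite !inE;
  by case: (X i f); case: (i \in I); case: (Y i == k).
Qed.

Lemma hOR_low (J : {set 'I_N}) d :
  - (ln (lleaf rho1 rho0 (cnt Y J true) 0) + ln (lleaf rho1 rho0 0 (cnt Y J false)))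
  <= hOR rho1 rho0 alpha beta Y J d.
Proof.
rewrite /hOR lerN2 ge_max; apply/andP; split; first exact: lnP1.
have : ln (psplit alpha beta d) <= 0.
  by apply: ln_le0; apply: (le_trans (psplit_le1 d)); apply: ltW.
lra.
Qed.

Lemma hOR_up (J : {set 'I_N}) d :
  hOR rho1 rho0 alpha beta Y J d <=
  - (ln (psplit alpha beta d) + ln (lleaf rho1 rho0 (cnt Y J true) 0)
     + ln (lleaf rho1 rho0 0 (cnt Y J false))).
Proof. by rewrite /hOR lerN2 le_max lexx orbT. Qed.

Lemma comb_ineq (h h0 h1 lpi lps x1 y0 x1a y0a x1b y0b : R) :
  h <= - (lps + x1 + y0) -> - (x1a + y0a) <= h0 -> - (x1b + y0b) <= h1 ->
  x1a + x1b <= x1 -> y0a + y0b <= y0 -> lpi <= lps ->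
  h <= - lpi + h0 + h1.
Proof. lra. Qed.

Lemma cost_ge_h (I : {set 'I_N}) d (t : ptree F) : valid X I d t ->
  ((hOR rho1 rho0 alpha beta Y I d)%:E <= cost rho1 rho0 alpha beta X Y I d t)%E.
Proof.
elim: t I d => [|f t0 IH0 t1 IH1] I d /=.
  move=> _; rewrite /leaf_cost.
  have pl1 : pleaf alpha beta X d I <= 1.
    rewrite /pleaf; case: ifP => _ //; have := psplit_gt0 d; lra.
  apply: le_trans; last first.
    apply: (leeD (neglog_ge0 _ pl1) (neglog_ge _)).
  by rewrite add0e lee_fin /hOR lerN2 le_max lexx.
move=> /and4P[dF fV v0 v1].
have h0 := IH0 _ _ v0; have h1 := IH1 _ _ v1.
rewrite /inner_cost.
have Vn0 : Vset X I != finset.set0.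
  by apply/negP => /eqP V0; move: fV; rewrite V0 inE.
have kpos : (0 < #|Vset X I|)%N by rewrite card_gt0.
have k1 : 1 <= #|Vset X I|%:R :> R by rewrite ler1n.
have ps0 := psplit_gt0 d.
have pi0 : 0 < pinner alpha beta X d I.
  by rewrite /pinner (negbTE Vn0) divr_gt0 // ltr0n.
have pile : ln (pinner alpha beta X d I) <= ln (psplit alpha beta d).
  rewrite ler_ln ?posrE //.
  rewrite /pinner (negbTE Vn0).
  have : (#|Vset X I|%:R : R)^-1 <= 1 by rewrite invf_le1 // (lt_le_trans ltr01 k1).
  have : 0 <= (#|Vset X I|%:R : R)^-1 by rewrite invr_ge0 ler0n.
  nra.
apply: le_trans; last first.
  apply: (leeD (leeD (lexx _) h0) h1).
rewrite neglog_pos // -!EFinD lee_fin.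
have u := hOR_up I d.
have l0 := hOR_low (restr X I f false) d.+1.
have l1 := hOR_low (restr X I f true) d.+1.
have e1 := cnt_split I f true.
have e0 := cnt_split I f false.
have q1 := lnP2 (cnt Y (restr X I f false) true) (cnt Y (restr X I f true) true).
have q0 := lnP2' (cnt Y (restr X I f false) false) (cnt Y (restr X I f true) false).
rewrite -e1 in q1; rewrite -e0 in q0.
move: u l0 l1 q1 q0 pile; apply: comb_ineq.
Qed.

Lemma hOR_le_fOR (I : {set 'I_N}) d :
  ((hOR rho1 rho0 alpha beta Y I d)%:E <= fOR rho1 rho0 alpha beta X Y I d)%E.
Proof.
apply/ereal_infP => _ [t vt <-]; exact: cost_ge_h.
Qed.

End Comb.

Theorem corollary15 (R : realType) (rho1 rho0 alpha beta : R)
  (hrho1 : 0 < rho1) (hrho0 : 0 < rho0)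
  (halpha0 : 0 < alpha) (halpha1 : alpha < 1) (hbeta : 0 <= beta)
  (N F : nat) (X : 'I_N -> 'I_F -> bool) (Y : 'I_N -> bool) :
  (forall (I : {set 'I_N}) (d : nat),
      reach X I d -> I != finset.set0 ->
      ((hOR rho1 rho0 alpha beta Y I d)%:E
         <= fOR rho1 rho0 alpha beta X Y I d)%E) /\
  (forall (I : {set 'I_N}) (d : nat) (f : 'I_F),
      reach X I d -> I != finset.set0 -> (d < F)%N -> f \in Vset X I ->
      ((hAND rho1 rho0 alpha beta X Y I d f)%:E
         <= fAND rho1 rho0 alpha beta X Y I d f)%E).
Proof.
have P1 : forall n m : nat,
  ln (lleaf rho1 rho0 n m) <= ln (lleaf rho1 rho0 n 0) + ln (lleaf rho1 rho0 0 m).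
  by move=> n m; apply: lnP1_.
have P2 : forall a b : nat,
  ln (lleaf rho1 rho0 a 0) + ln (lleaf rho1 rho0 b 0) <= ln (lleaf rho1 rho0 (a + b)%N 0).
  by move=> a b; apply: lnP2_.
have P2' : forall a b : nat,
  ln (lleaf rho1 rho0 0 a) + ln (lleaf rho1 rho0 0 b) <= ln (lleaf rho1 rho0 0 (a + b)%N).
  by move=> a b; apply: lnP2'_.
split.
- by move=> I d _ _; apply: hOR_le_fOR.
- move=> I d f _ _ _ _; rewrite /hAND /fAND EFinD.
  by apply: leeD; apply: hOR_le_fOR.
Qed.
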